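(* Let $\mathcal X \xrightarrow{i_*} \mathcal T \xrightarrow{j^!} \mathcal Y$ be a recollement, let $S_{\mathcal X}=\{X_1,\dots,X_m\}$ be a simple-minded collection of $\mathcal X$ and $S_{\mathcal Y}=\{Y_1,\dots,Y_n\}$ a simple-minded collection of $\mathcal Y$, and let $W_1,\dots,W_n$ be the objects defined in the context. Then $$S_{\mathcal T}=\langle S_{\mathcal X},S_{\mathcal Y}\rangle=\{i_*(X_1),\dots,i_*(X_m),W_1,\dots,W_n\}$$ is a simple-minded collection of $\mathcal T$.
   Context: Let $K$ be an algebraically closed field. All triangulated categories are $K$-linear, Hom-finite and Krull–Schmidt, with shift functor $[1]$. A recollement of triangulated categories $\mathcal X,\mathcal T,\mathcal Y$ consists of triangle functors $i^*,i^!:\mathcal T\to\mathcal X$, $i_*=i_!:\mathcal X\to\mathcal T$, $j_!,j_*:\mathcal Y\to\mathcal T$, $j^!=j^*:\mathcal T\to\mathcal Y$ such that $(i^*,i_* )$, $(i_*,i^!)$, $(j_!,j^!)$, $(j^!,j_* )$ are adjoint pairs; $i_*,j_*,j_!$ are fully faithful; $i^!j_*=0$ (hence $j^!i_*=0$ and $i^*j_!=0$); and for every $T\in\mathcal T$ there are triangles $i_*i^!T\to T\to j_*j^!T\to i_*i^!T[1]$ and $j_!j^!T\to T\to i_*i^*T\to j_!j^!T[1]$ (given by the units/counits). A simple-minded collection of a triangulated category $\mathcal C$ is a finite set $S=\{S_1,\dots,S_n\}$ of objects with $\dim_K\mathrm{Hom}(S_i,S_j)=\delta_{ij}$, $\mathrm{Hom}(S_i,S_j[k])=0$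 for all $k<0$, and such that the smallest thick triangulated subcategory containing $S$ is $\mathcal C$. For such $S$ and $a\in\mathbb Z$, $\mathrm{Filt}\,S[\geq a]$ (resp. $\mathrm{Filt}\,S[\leq a]$) denotes the extension closure of $\{S_i[k]: k\ge a\}$ (resp. $k\le a$); $(\mathrm{Filt}\,S[\geq 0],\mathrm{Filt}\,S[\leq 0])$ is a bounded $t$-structure (aisle, coaisle) on $\mathcal C$, in particular $\mathrm{Hom}(\mathrm{Filt}\,S[\ge 0],\mathrm{Filt}\,S[\le -1])=0$ and every object $C$ lies in a triangle $U\to C\to V\to U[1]$ with $U\in \mathrm{Filt}\,S[\ge 0]$, $V\in\mathrm{Filt}\,S[\le -1]$. Gluing construction: given simple-minded collections $S_{\mathcal X}=\{X_1,\dots,X_m\}$ of $\mathcal X$ and $S_{\mathcal Y}=\{Y_1,\dots,Y_n\}$ of $\mathcal Y$, for each $i$ take the truncation triangle $U_i\xrightarrow{g}i^!j_!(Y_i)\to V_i\to U_i[1]$ in $\mathcal X$ with $U_i\in\mathrm{Filt}\,S_{\mathcal X}[\ge0]$, $V_i\in\mathrm{Filt}\,S_{\mathcal X}[\le -1]$, let $f:i_*i^!j_!(Y_i)\to j_!(Y_i)$ be the counit, and define $W_i$ by the triangle $(\#)$: $i_*(U_i)\xrightarrow{f\circ i_*(g)} j_!(Y_i)\to W_i\to i_*(U_i)[1]$. By the octahedral axiom there is also a triangle $(\#\#)$: $i_*(V_i)\to W_i\to j_*(Y_i)\to i_*(V_i)[1]$. The glued collection is the ordered collection $\langle S_{\mathcal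 X},S_{\mathcal Y}\rangle=\{i_*(X_1),\dots,i_*(X_m),W_1,\dots,W_n\}$ (well defined up to isomorphism). *)

(* Defs.v *)
From HB Require Import structures.
From mathcomp Require Import all_boot all_order all_algebra.
Set Implicit Arguments. Unset Strict Implicit. Unset Printing Implicit Defensive.
Import GRing.Theory.
Local Open Scope ring_scope.

(* (Mor X Y : vectType K is a finite-dimensional K-vector space)        *)
Record cat_data (K : fieldType) := CatData {
  Obj : Type;
  Mor : Obj -> Obj -> vectType K;
  mcomp : forall X Y Z : Obj, Mor Y Z -> Mor X Y -> Mor X Z;
  idm : forall X : Obj, Mor X X }.
Arguments Obj {K} c.
Arguments Mor {K} c X Y.
Arguments mcomp {K} c {X Y Z} g f.
Arguments idm {K} c X.

Section Cat.
Variables (K : fieldType) (C : cat_data K).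

Definition is_cat : Prop :=
  [/\ (forall X Y Z W (h : Mor C Z W) (g : Mor C Y Z) (f : Mor C X Y),
          mcomp C h (mcomp C g f) = mcomp C (mcomp C h g) f),
      (forall X Y (f : Mor C X Y), mcomp C (idm C Y) f = f),
      (forall X Y (f : Mor C X Y), mcomp C f (idm C X) = f),
      (forall X Y Z (f : Mor C X Y) (a : K) (g g' : Mor C Y Z),
          mcomp C (a *: g + g') f = a *: mcomp C g f + mcomp C g' f) &
      (forall X Y Z (g : Mor C Y Z) (a : K) (f f' : Mor C X Y),
          mcomp C g (a *: f + f') = a *: mcomp C g f + mcomp C g f')].

Definition is_iso X Y (f : Mor C X Y) : Prop :=
  exists g : Mor C Y X, mcomp C g f = idm C X /\ mcomp C f g = idm C Y.

Definition iso_obj (X Y : Obj C) : Prop := exists f : Mor C X Y, is_iso f.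

Definition is_zero_obj (Z : Obj C) : Prop := idm C Z = 0.

Definition is_dsum (X : Obj C) r (Y : 'I_r -> Obj C)
    (inj : forall k, Mor C (Y k) X) (proj : forall k, Mor C X (Y k)) : Prop :=
  [/\ (forall k, mcomp C (proj k) (inj k) = idm C (Y k)),
      (forall k l, k != l -> mcomp C (proj k) (inj l) = 0) &
      \sum_(k < r) mcomp C (inj k) (proj k) = idm C X].

Definition local_end (Y : Obj C) : Prop :=
  idm C Y != 0 /\
  forall f : Mor C Y Y, is_iso f \/ is_iso (idm C Y - f).

Definition is_additive : Prop :=
  (exists Z, is_zero_obj Z) /\
  forall X1 X2 : Obj C, exists X : Obj C, exists inj, exists proj,
     @is_dsum X 2 (fun k => if val k == 0%N then X1 else X2) inj proj.

Definition krull_schmidt : Prop :=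
  forall X : Obj C, exists r, exists Y : 'I_r -> Obj C, exists inj, exists proj,
     @is_dsum X r Y inj proj /\ forall k, local_end (Y k).

End Cat.

Record tri_data (K : fieldType) := TriData {
  tcat :> cat_data K;
  sh : Obj tcat -> Obj tcat;
  shm : forall X Y, Mor tcat X Y -> Mor tcat (sh X) (sh Y);
  shinv : Obj tcat -> Obj tcat;          (* object part of a quasi-inverse *)
  dist : forall X Y Z : Obj tcat,
     Mor tcat X Y -> Mor tcat Y Z -> Mor tcat Z (sh X) -> Prop }.
Arguments sh {K} t X.
Arguments shm {K} t {X Y} f.
Arguments shinv {K} t X.
Arguments dist {K} t {X Y Z} f g h.

Section Tri.
Variables (K : fieldType) (T : tri_data K).

Definition shift_functor_ax : Prop :=
  [/\ (forall X, shm T (idm T X) = idm T (sh T X)),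
      (forall X Y Z (g : Mor T Y Z) (f : Mor T X Y),
          shm T (mcomp T g f) = mcomp T (shm T g) (shm T f)),
      (forall X Y (a : K) (f f' : Mor T X Y),
          shm T (a *: f + f') = a *: shm T f + shm T f'),
      (forall X Y, bijective (@shm K T X Y)) &
      (forall X, iso_obj (sh T (shinv T X)) X)].

Definition TR1 : Prop :=
  [/\
      (forall X Y Z X' Y' Z' (f : Mor T X Y) (g : Mor T Y Z) (h : Mor T Z (sh T X))
              (f' : Mor T X' Y') (g' : Mor T Y' Z') (h' : Mor T Z' (sh T X'))
              (a : Mor T X X') (b : Mor T Y Y') (c : Mor T Z Z'),
          is_iso a -> is_iso b -> is_iso c ->
          mcomp T b f = mcomp T f' a -> mcomp T c g = mcomp T g' b ->
          mcomp T (shm T a) h = mcomp T h' c ->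
          dist T f g h -> dist T f' g' h'),
      (forall X, exists Z, is_zero_obj Z /\
          dist T (idm T X) (0 : Mor T X Z) (0 : Mor T Z (sh T X))) &
      (forall X Y (f : Mor T X Y), exists Z (g : Mor T Y Z) (h : Mor T Z (sh T X)),
          dist T f g h)].

Definition TR2 : Prop :=
  forall X Y Z (f : Mor T X Y) (g : Mor T Y Z) (h : Mor T Z (sh T X)),
    dist T f g h <-> dist T g h (- shm T f).

Definition TR3 : Prop :=
  forall X Y Z X' Y' Z' (f : Mor T X Y) (g : Mor T Y Z) (h : Mor T Z (sh T X))
         (f' : Mor T X' Y') (g' : Mor T Y' Z') (h' : Mor T Z' (sh T X'))
         (a : Mor T X X') (b : Mor T Y Y'),
    dist T f g h -> dist T f' g' h' -> mcomp T b f = mcomp T f' a ->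
    exists c : Mor T Z Z',
      mcomp T c g = mcomp T g' b /\ mcomp T (shm T a) h = mcomp T h' c.

Definition TR4 : Prop :=
  forall X Y Z Z' X' Y' (f : Mor T X Y) (g : Mor T Y Z)
         (f1 : Mor T Y Z') (f2 : Mor T Z' (sh T X))
         (g1 : Mor T Z X') (g2 : Mor T X' (sh T Y))
         (h1 : Mor T Z Y') (h2 : Mor T Y' (sh T X)),
    dist T f f1 f2 -> dist T g g1 g2 -> dist T (mcomp T g f) h1 h2 ->
    exists (u : Mor T Z' Y') (v : Mor T Y' X'),
      [/\ dist T u v (mcomp T (shm T f1) g2),
          mcomp T u f1 = mcomp T h1 g, mcomp T h2 u = f2,
          mcomp T v h1 = g1 & mcomp T g2 v = mcomp T (shm T f) h2].

Definition is_triangulated : Prop :=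
  [/\ [/\ is_cat T, is_additive T & krull_schmidt T], shift_functor_ax,
      TR1, TR2 & [/\ TR3 & TR4]].

Definition shiftZ (X : Obj T) (k : int) : Obj T :=
  match k with
  | Posz n => iter n (sh T) X
  | Negz n => iter n.+1 (shinv T) X
  end.

Definition is_thick (P : Obj T -> Prop) : Prop :=
  [/\ (forall X Y, iso_obj X Y -> P X -> P Y),
      (forall X, P X -> P (sh T X)),
      (forall X, P X -> P (shinv T X)),
      (forall X Y Z (f : Mor T X Y) (g : Mor T Y Z) (h : Mor T Z (sh T X)),
          dist T f g h -> P X -> P Y -> P Z) &
      (forall X A B inj proj,
          @is_dsum K T X 2 (fun k => if val k == 0%N then A else B) inj proj ->
          P X -> P A)].

Inductive Filt r (S : 'I_r -> Obj T) (range : int -> bool) : Obj T -> Prop :=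
  | Filt_gen i k : range k -> Filt S range (shiftZ (S i) k)
  | Filt_zero Z : is_zero_obj Z -> Filt S range Z
  | Filt_iso X Y : iso_obj X Y -> Filt S range X -> Filt S range Y
  | Filt_ext A B C (f : Mor T A B) (g : Mor T B C) (h : Mor T C (sh T A)) :
      dist T f g h -> Filt S range A -> Filt S range C -> Filt S range B.

Definition is_smc r (S : 'I_r -> Obj T) : Prop :=
  [/\ (forall i j, \dim (fullv : {vspace Mor T (S i) (S j)}) = nat_of_bool (i == j)),
      (forall i j (k : int), (k < 0)%R ->
          \dim (fullv : {vspace Mor T (S i) (shiftZ (S j) k)}) = 0%N) &
      (forall P : Obj T -> Prop, is_thick P -> (forall i, P (S i)) ->
          forall X, P X)].

End Tri.

Record tfun (K : fieldType) (A B : tri_data K) := TFun {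
  fobj :> Obj A -> Obj B;
  fmap : forall X Y, Mor A X Y -> Mor B (fobj X) (fobj Y);
  fphi : forall X, Mor B (fobj (sh A X)) (sh B (fobj X)) }.
Arguments fmap {K A B} t {X Y} _.
Arguments fphi {K A B} t X.

Section Fun.
Variables (K : fieldType) (A B : tri_data K).

Definition is_tri_functor (F : tfun A B) : Prop :=
  [/\ (forall X, fmap F (idm A X) = idm B (F X)) /\
      (forall X Y Z (g : Mor A Y Z) (f : Mor A X Y),
          fmap F (mcomp A g f) = mcomp B (fmap F g) (fmap F f)),
      (forall X Y (a : K) (f f' : Mor A X Y),
          fmap F (a *: f + f') = a *: fmap F f + fmap F f'),
      (forall X, is_iso (fphi F X)),
      (forall X Y (f : Mor A X Y),
          mcomp B (fphi F Y) (fmap F (shm A f)) = mcomp B (shm B (fmap F f)) (fphi F X)) &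
      (forall X Y Z (f : Mor A X Y) (g : Mor A Y Z) (h : Mor A Z (sh A X)),
          dist A f g h ->
          dist B (fmap F f) (fmap F g) (mcomp B (fphi F X) (fmap F h)))].

Definition fully_faithful (F : tfun A B) : Prop :=
  forall X Y, bijective (@fmap K A B F X Y).

Definition is_adjunction (F : tfun A B) (G : tfun B A)
    (eta : forall X : Obj A, Mor A X (G (F X)))
    (eps : forall Y : Obj B, Mor B (F (G Y)) Y) : Prop :=
  [/\ (forall X X' (f : Mor A X X'),
          mcomp A (fmap G (fmap F f)) (eta X) = mcomp A (eta X') f),
      (forall Y Y' (g : Mor B Y Y'),
          mcomp B g (eps Y) = mcomp B (eps Y') (fmap F (fmap G g))),
      (forall X, mcomp B (eps (F X)) (fmap F (eta X)) = idm B (F X)) &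
      (forall Y, mcomp A (fmap G (eps Y)) (eta (G Y)) = idm A (G Y))].

End Fun.

Record recollement_data (K : fieldType) (X T Y : tri_data K) := RecData {
  i_up_star  : tfun T X;
  i_low_star : tfun X T;   (* i_* = i_! *)
  i_up_shriek : tfun T X;
  j_low_shriek : tfun Y T;
  j_up : tfun T Y;         (* j^! = j^* *)
  j_low_star : tfun Y T;
  unit1 : forall U : Obj T, Mor T U (i_low_star (i_up_star U));
  counit1 : forall V : Obj X, Mor X (i_up_star (i_low_star V)) V;
  unit2 : forall V : Obj X, Mor X V (i_up_shriek (i_low_star V));
  counit2 : forall U : Obj T, Mor T (i_low_star (i_up_shriek U)) U;
  unit3 : forall W : Obj Y, Mor Y W (j_up (j_low_shriek W));
  counit3 : forall U : Obj T, Mor T (j_low_shriek (j_up U)) U;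
  unit4 : forall U : Obj T, Mor T U (j_low_star (j_up U));
  counit4 : forall W : Obj Y, Mor Y (j_up (j_low_star W)) W }.

Definition is_recollement (K : fieldType) (X T Y : tri_data K)
    (R : recollement_data X T Y) : Prop :=
  [/\ [/\ is_tri_functor (i_up_star R), is_tri_functor (i_low_star R),
          is_tri_functor (i_up_shriek R), is_tri_functor (j_low_shriek R) &
          is_tri_functor (j_up R) /\ is_tri_functor (j_low_star R)],
      [/\ is_adjunction (unit1 R) (counit1 R),
          is_adjunction (unit2 R) (counit2 R),
          is_adjunction (unit3 R) (counit3 R) &
          is_adjunction (unit4 R) (counit4 R)],
      [/\ fully_faithful (i_low_star R), fully_faithful (j_low_star R) &
          fully_faithful (j_low_shriek R)],
      (forall W : Obj Y, is_zero_obj (i_up_shriek R (j_low_star R W))) &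
      (forall U : Obj T,
          (exists h, dist T (counit2 R U) (unit4 R U) h) /\
          (exists h, dist T (counit3 R U) (unit1 R U) h))].

Definition glue (K : fieldType) (X T : tri_data K) (iL : tfun X T) m n
    (SX : 'I_m -> Obj X) (W : 'I_n -> Obj T) : 'I_(m + n) -> Obj T :=
  fun k => match split k with inl a => iL (SX a) | inr b => W b end.

(* Main.v *)
Require Import Defs.
From HB Require Import structures.
From mathcomp Require Import all_boot all_order all_algebra.
From Stdlib Require Import IndefiniteDescription FunctionalExtensionality.
Set Implicit Arguments. Unset Strict Implicit. Unset Printing Implicit Defensive.
Import GRing.Theory.
Local Open Scope ring_scope.

Definition islin (K : fieldType) (U V : lmodType K) (f : U -> V) :=
  forall a x y, f (a *: x + y) = a *: f x + f y.

Section Lin.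
Variables (K : fieldType) (U V : lmodType K) (f : U -> V) (lf : islin f).
Lemma lin0 : f 0 = 0.
Proof.
have := lf 1 0 0; rewrite scaler0 addr0 scale1r => h.
by apply/esym/(addrI (f 0)); rewrite addr0 -h.
Qed.
Lemma linN x : f (- x) = - f x.
Proof. by have := lf (-1) x 0; rewrite !scaleN1r addr0 lin0 addr0 => ->. Qed.
Lemma linD x y : f (x + y) = f x + f y.
Proof. by have := lf 1 x y; rewrite !scale1r => ->. Qed.
End Lin.

Section Dim.
Variables (K : fieldType) (U V : vectType K) (f : U -> V).
Hypothesis lf : islin f.
Definition ff := f.
Lemma ff_lin : linear ff.
Proof. move=> a x y; exact: lf. Qed.
HB.instance Definition _ := GRing.isLinear.Build K U V _ ff ff_lin.
Lemma dim_le_inj : injective f -> (\dim {:U} <= \dim {:V})%N.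
Proof.
move=> inj.
have k0 : lker (linfun ff) = 0%VS.
  apply/eqP/lker0P => x y; rewrite !lfunE /=; exact: inj.
rewrite -(limg_dim_eq (f:=linfun ff) (U:=fullv)); last by rewrite k0 capv0.
exact: dimvS (subvf _).
Qed.
End Dim.

Lemma dim_bij (K : fieldType) (U V : vectType K) (f : U -> V) :
  islin f -> bijective f -> \dim {:U} = \dim {:V}.
Proof.
move=> lf [g fg gf]; apply/eqP; rewrite eqn_leq.
rewrite (dim_le_inj lf (can_inj fg)) /=.
apply: (dim_le_inj (f:=g)); last exact: can_inj gf.
by move=> a x y; apply: (can_inj fg); rewrite gf lf !gf.
Qed.

Lemma dim0P (K : fieldType) (U : vectType K) :
  (forall x : U, x = 0) <-> \dim {:U} = 0%N.
Proof.
split=> [h|h x].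
  apply/eqP; rewrite dimv_eq0; apply/eqP/vspaceP => x.
  by rewrite memvf (h x) mem0v.
have /eqP := h; rewrite dimv_eq0 => /eqP e.
by have := memvf x; rewrite e memv0 => /eqP.
Qed.

Definition homz (K : fieldType) (C : cat_data K) (A B : Obj C) :=
  forall f : Mor C A B, f = 0.

Section CatL.
Variables (K : fieldType) (C : cat_data K) (HC : is_cat C).
Local Notation "g \oo f" := (mcomp C g f) (at level 40, left associativity).

Lemma compA X Y Z W (h : Mor C Z W) (g : Mor C Y Z) (f : Mor C X Y) :
  h \oo (g \oo f) = h \oo g \oo f.
Proof. by case: HC. Qed.
Lemma comp1l X Y (f : Mor C X Y) : idm C Y \oo f = f.
Proof. by case: HC. Qed.
Lemma comp1r X Y (f : Mor C X Y) : f \oo idm C X = f.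
Proof. by case: HC. Qed.
Lemma complinl X Y Z (f : Mor C X Y) : islin (fun g : Mor C Y Z => g \oo f).
Proof. by case: HC => _ _ _ h _ a x y; apply: h. Qed.
Lemma complinr X Y Z (g : Mor C Y Z) : islin (fun f : Mor C X Y => g \oo f).
Proof. by case: HC => _ _ _ _ h a x y; apply: h. Qed.
Lemma comp0l X Y Z (f : Mor C X Y) : (0 : Mor C Y Z) \oo f = 0.
Proof. exact: (lin0 (complinl (Z:=Z) f)). Qed.
Lemma comp0r X Y Z (g : Mor C Y Z) : g \oo (0 : Mor C X Y) = 0.
Proof. exact: (lin0 (complinr (X:=X) g)). Qed.
Lemma compNl X Y Z (f : Mor C X Y) (g : Mor C Y Z) : (- g) \oo f = - (g \oo f).
Proof. exact: (linN (complinl (Z:=Z) f)). Qed.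
Lemma compNr X Y Z (f : Mor C X Y) (g : Mor C Y Z) : g \oo (- f) = - (g \oo f).
Proof. exact: (linN (complinr (X:=X) g)). Qed.

Lemma iso_obj_refl (X : Obj C) : iso_obj X X.
Proof. by exists (idm C X), (idm C X); rewrite comp1l. Qed.
Lemma iso_obj_sym (X Y : Obj C) : iso_obj X Y -> iso_obj Y X.
Proof. by case=> f [g [h1 h2]]; exists g, f. Qed.
Lemma iso_obj_trans (X Y Z : Obj C) : iso_obj X Y -> iso_obj Y Z -> iso_obj X Z.
Proof.
case=> f [f' [h1 h2]] [g [g' [k1 k2]]]; exists (g \oo f), (f' \oo g'); split.
  by rewrite compA -(compA f') k1 comp1r h1.
by rewrite compA -(compA g) h2 comp1r k2.
Qed.

Lemma homz_isoL (A A' B : Obj C) : iso_obj A A' -> homz A B -> homz A' B.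
Proof.
case=> f [f' [h1 h2]] hz x.
by rewrite -(comp1r x) -h2 compA (hz (x \oo f)) comp0l.
Qed.
Lemma homz_isoR (A B B' : Obj C) : iso_obj B B' -> homz A B -> homz A B'.
Proof.
case=> f [f' [h1 h2]] hz x.
by rewrite -(comp1l x) -h2 -compA (hz (f' \oo x)) comp0r.
Qed.
Lemma homz_zeroL (Z A : Obj C) : is_zero_obj Z -> homz Z A.
Proof. by rewrite /is_zero_obj => z x; rewrite -(comp1r x) z comp0r. Qed.
Lemma homz_zeroR (Z A : Obj C) : is_zero_obj Z -> homz A Z.
Proof. by rewrite /is_zero_obj => z x; rewrite -(comp1l x) z comp0l. Qed.
Lemma zero_iso (Z Z' : Obj C) : is_zero_obj Z -> iso_obj Z Z' -> is_zero_obj Z'.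
Proof.
move=> z e; exact: (homz_isoL e (homz_zeroL (A:=Z') z) (idm C Z')).
Qed.

Lemma homz_dim (A B : Obj C) : homz A B <-> \dim {: Mor C A B} = 0%N.
Proof. exact: dim0P. Qed.

Lemma dim_postiso (A B B' : Obj C) : iso_obj B B' ->
  \dim {: Mor C A B} = \dim {: Mor C A B'}.
Proof.
case=> f [f' [h1 h2]]; apply: (dim_bij (f := fun x => f \oo x)).
  exact: complinr.
exists (fun x => f' \oo x) => x; by rewrite compA ?h1 ?h2 comp1l.
Qed.
Lemma dim_preiso (A A' B : Obj C) : iso_obj A A' ->
  \dim {: Mor C A B} = \dim {: Mor C A' B}.
Proof.
case=> f [f' [h1 h2]]; apply: (dim_bij (f := fun x => x \oo f')).
  exact: complinl.
exists (fun x => x \oo f) => x; by rewrite -compA ?h1 ?h2 comp1r.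
Qed.
End CatL.

Section TriL.
Variables (K : fieldType) (T : tri_data K) (HT : is_triangulated T).
Local Notation "g \oo f" := (mcomp T g f) (at level 40, left associativity).

Lemma catT : is_cat T. Proof. by case: HT => -[]. Qed.
Lemma shax : shift_functor_ax T. Proof. by case: HT. Qed.
Lemma tr1 : TR1 T. Proof. by case: HT. Qed.
Lemma tr2 : TR2 T. Proof. by case: HT. Qed.
Lemma tr3 : TR3 T. Proof. by case: HT => _ _ _ _ []. Qed.
Lemma tr4 : TR4 T. Proof. by case: HT => _ _ _ _ []. Qed.

Lemma shm_lin (X Y : Obj T) : islin (@shm K T X Y).
Proof. by case: shax => _ _ h _ _ a x y; apply: h. Qed.
Lemma shm_bij (X Y : Obj T) : bijective (@shm K T X Y).
Proof. by case: shax. Qed.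
Lemma shm_id (X : Obj T) : shm T (idm T X) = idm T (sh T X).
Proof. by case: shax. Qed.
Lemma shm_comp (X Y Z : Obj T) (g : Mor T Y Z) (f : Mor T X Y) :
  shm T (g \oo f) = shm T g \oo shm T f.
Proof. by case: shax. Qed.
Lemma shinv_iso (X : Obj T) : iso_obj (sh T (shinv T X)) X.
Proof. by case: shax. Qed.
Lemma shm0 (X Y : Obj T) : shm T (0 : Mor T X Y) = 0.
Proof. exact (lin0 (shm_lin (X:=X) (Y:=Y))). Qed.
Lemma shmN (X Y : Obj T) (f : Mor T X Y) : shm T (- f) = - shm T f.
Proof. exact (linN (shm_lin (X:=X) (Y:=Y)) f). Qed.
Lemma shm_inj (X Y : Obj T) : injective (@shm K T X Y).
Proof. exact: bij_inj (shm_bij X Y). Qed.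
Lemma shm_surj (X Y : Obj T) (f : Mor T (sh T X) (sh T Y)) :
  exists f0, f = shm T f0.
Proof. by case: (shm_bij X Y) => g _ h; exists (g f); rewrite h. Qed.

Lemma iso_is_iso (X Y : Obj T) : iso_obj X Y -> exists f : Mor T X Y, is_iso f.
Proof. by []. Qed.
Lemma idm_iso (X : Obj T) : is_iso (idm T X).
Proof. by exists (idm T X); rewrite (comp1l catT). Qed.

Lemma sh_iso (A B : Obj T) : iso_obj A B -> iso_obj (sh T A) (sh T B).
Proof.
case=> f [g [h1 h2]]; exists (shm T f), (shm T g).
by rewrite -!shm_comp h1 h2 !shm_id.
Qed.
Lemma iter_sh_iso k (A B : Obj T) : iso_obj A B ->
  iso_obj (iter k (sh T) A) (iter k (sh T) B).
Proof. by elim: k => //= k IH /IH; apply: sh_iso. Qed.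
Lemma sh_reflect_iso (A B : Obj T) : iso_obj (sh T A) (sh T B) -> iso_obj A B.
Proof.
case=> f [g [h1 h2]].
case: (shm_surj f) => f0 e1; case: (shm_surj g) => g0 e2; subst.
exists f0, g0; split; apply: shm_inj; by rewrite shm_comp ?h1 ?h2 shm_id.
Qed.
Lemma shinv_sh (A : Obj T) : iso_obj (shinv T (sh T A)) A.
Proof. exact/sh_reflect_iso/shinv_iso. Qed.
Lemma sh_zero (Z : Obj T) : is_zero_obj Z -> is_zero_obj (sh T Z).
Proof. by rewrite /is_zero_obj => z; rewrite -shm_id z shm0. Qed.

Lemma homz_sh (A B : Obj T) : homz A B -> homz (sh T A) (sh T B).
Proof. by move=> h f; case: (shm_surj f) => f0 ->; rewrite (h f0) shm0. Qed.
Lemma homz_iter_sh k (A B : Obj T) : homz A B ->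
  homz (iter k (sh T) A) (iter k (sh T) B).
Proof. by elim: k => //= k IH /IH; apply: homz_sh. Qed.

Lemma homz_shinv (A B : Obj T) : homz A (shinv T B) <-> homz (sh T A) B.
Proof.
split=> h.
  apply: (homz_isoR catT (shinv_iso B)); exact: homz_sh.
move=> f; apply: shm_inj; rewrite shm0.
have := homz_isoR catT (iso_obj_sym (shinv_iso B)) h; exact.
Qed.
Lemma homz_iter_shinv n (A B : Obj T) :
  homz A (iter n (shinv T) B) <-> homz (iter n (sh T) A) B.
Proof.
elim: n A => [|n IH] A //=.
rewrite -[sh T (iter n _ A)]/(iter n.+1 (sh T) A) iterSr.
exact: (iff_trans (homz_shinv A (iter n (shinv T) B)) (IH (sh T A))).
Qed.

Lemma rot X Y Z (f : Mor T X Y) (g : Mor T Y Z) (h : Mor T Z (sh T X)) :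
  dist T f g h -> dist T g h (- shm T f).
Proof. by move/tr2. Qed.
Lemma rot3 X Y Z (f : Mor T X Y) (g : Mor T Y Z) (h : Mor T Z (sh T X)) :
  dist T f g h -> dist T (- shm T f) (- shm T g) (- shm T h).
Proof. by move/rot/rot/rot. Qed.

Lemma tri_sh k X Y Z (f : Mor T X Y) (g : Mor T Y Z) (h : Mor T Z (sh T X)) :
  dist T f g h -> exists (f' : Mor T (iter k (sh T) X) (iter k (sh T) Y))
    (g' : Mor T (iter k (sh T) Y) (iter k (sh T) Z))
    (h' : Mor T (iter k (sh T) Z) (sh T (iter k (sh T) X))), dist T f' g' h'.
Proof.
move=> d; elim: k => [|k [f' [g' [h' d']]]]; first by exists f, g, h.
by exists (- shm T f'), (- shm T g'), (- shm T h'); apply: rot3.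
Qed.

Lemma E1 X Y Z (f : Mor T X Y) (g : Mor T Y Z) (h : Mor T Z (sh T X)) :
  dist T f g h -> g \oo f = 0.
Proof.
move=> d; case: tr1 => _ /(_ X) [Z0 [z0 d0]] _.
have [c [e1 e2]] := tr3 (a:=idm T X) (b:=f) d0 d (erefl _).
by rewrite -e1 (comp0r catT).
Qed.

Lemma E2 X Y Z (f : Mor T X Y) (g : Mor T Y Z) (h : Mor T Z (sh T X))
  Q (a : Mor T Q Y) : dist T f g h -> g \oo a = 0 -> exists b, a = f \oo b.
Proof.
move=> d ga; case: tr1 => _ /(_ Q) [Z0 [z0 d0]] _.
have eq : (0 : Mor T Z0 Z) \oo (0 : Mor T Q Z0) = g \oo a
  by rewrite (comp0l catT) ga.
have [c [e1 e2]] := tr3 (rot d0) (rot d) eq.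
case: (shm_surj c) => b0 ec; subst c; exists b0; apply: shm_inj.
move: e2; rewrite shm_id (compNr catT) (comp1r catT) (compNl catT) shm_comp.
by move/eqP; rewrite eqr_opp => /eqP.
Qed.

Lemma tri_idQ (Q : Obj T) : exists W,
  dist T (0 : Mor T W Q) (idm T Q) (0 : Mor T Q (sh T W)).
Proof.
case: tr1 => hiso /(_ Q) [Z0 [z0 d0]] _.
exists (shinv T Z0).
case: (iso_obj_sym (shinv_iso Z0)) => c ic.
have d1 : dist T (idm T Q) (0 : Mor T Q (sh T (shinv T Z0))) (0 : Mor T _ (sh T Q)).
  apply: (hiso _ _ _ _ _ _ _ _ _ _ _ _ (idm T Q) (idm T Q) c (idm_iso Q) (idm_iso Q) ic _ _ _ d0).
  - by [].
  - by rewrite (comp0r catT) (comp0l catT).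
  - by rewrite (comp0r catT) (comp0l catT).
apply/tr2; by rewrite shm0 oppr0.
Qed.

Lemma E3 X Y Z (f : Mor T X Y) (g : Mor T Y Z) (h : Mor T Z (sh T X))
  Q (a : Mor T Y Q) : dist T f g h -> a \oo f = 0 -> exists c, a = c \oo g.
Proof.
move=> d af; case: (tri_idQ Q) => W dW.
have eq : a \oo f = (0 : Mor T W Q) \oo (0 : Mor T X W)
  by rewrite (comp0l catT) af.
have [c [e1 e2]] := tr3 d dW eq.
by exists c; rewrite e1 (comp1l catT).
Qed.

Lemma vanR X Y Z (f : Mor T X Y) (g : Mor T Y Z) (h : Mor T Z (sh T X)) Q :
  dist T f g h -> homz Q X -> homz Q Z -> homz Q Y.
Proof.
move=> d hX hZ a; case: (E2 d (hZ (g \oo a))) => b ->.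
by rewrite (hX b) (comp0r catT).
Qed.
Lemma vanL X Y Z (f : Mor T X Y) (g : Mor T Y Z) (h : Mor T Z (sh T X)) Q :
  dist T f g h -> homz X Q -> homz Z Q -> homz Y Q.
Proof.
move=> d hX hZ a; case: (E3 d (hX (a \oo f))) => c ->.
by rewrite (hZ c) (comp0l catT).
Qed.

Lemma postiso X Y Z (f : Mor T X Y) (g : Mor T Y Z) (h : Mor T Z (sh T X)) Q :
  dist T f g h -> homz Q X -> homz Q (sh T X) ->
  \dim {: Mor T Q Y} = \dim {: Mor T Q Z}.
Proof.
move=> d hX hsX; apply: (dim_bij (f := fun a => g \oo a)).
  exact: (complinr catT).
pose s (b : Mor T Q Z) := proj1_sig (constructive_indefinite_description _ (E2 (rot d) (hsX (h \oo b)))).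
have sK b : g \oo s b = b by rewrite -(proj2_sig (constructive_indefinite_description _ (E2 (rot d) (hsX (h \oo b))))).
exists s => // a; apply/eqP; rewrite -subr_eq0; apply/eqP.
have : g \oo (s (g \oo a) - a) = 0.
  by rewrite (linD (complinr catT (X:=Q) g)) (compNr catT) sK subrr.
by case/(E2 d) => c ->; rewrite (hX c) (comp0r catT).
Qed.

Lemma preiso X Y Z (f : Mor T X Y) (g : Mor T Y Z) (h : Mor T Z (sh T X)) Q :
  dist T f g h -> homz X Q -> homz (sh T X) Q ->
  \dim {: Mor T Z Q} = \dim {: Mor T Y Q}.
Proof.
move=> d hX hsX; apply: (dim_bij (f := fun a => a \oo g)).
  exact: (complinl catT).
pose s (b : Mor T Y Q) := proj1_sig (constructive_indefinite_description _ (E3 d (hX (b \oo f)))).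
have sK b : s b \oo g = b by rewrite -(proj2_sig (constructive_indefinite_description _ (E3 d (hX (b \oo f))))).
exists s => // a; apply/eqP; rewrite -subr_eq0; apply/eqP.
have : (s (a \oo g) - a) \oo g = 0.
  by rewrite (linD (complinl catT (Z:=Q) g)) (compNl catT) sK subrr.
by case/(E3 (rot d)) => c ->; rewrite (hsX c) (comp0l catT).
Qed.
End TriL.

Lemma dsum_transport (K : fieldType) (C : cat_data K) (X : Obj C) r
  (Y Y' : 'I_r -> Obj C) inj proj : Y = Y' -> @is_dsum K C X r Y inj proj ->
  exists inj' proj', @is_dsum K C X r Y' inj' proj'.
Proof. by move=> e; subst Y'; exists inj, proj. Qed.

Section FunL.
Variables (K : fieldType) (A B : tri_data K).
Variables (HA : is_triangulated A) (HB : is_triangulated B).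
Variables (F : tfun A B) (HF : is_tri_functor F).

Lemma fmap_id (X : Obj A) : fmap F (idm A X) = idm B (F X).
Proof. by case: HF => -[]. Qed.
Lemma fmap_comp (X Y Z : Obj A) (g : Mor A Y Z) (f : Mor A X Y) :
  fmap F (mcomp A g f) = mcomp B (fmap F g) (fmap F f).
Proof. by case: HF => -[]. Qed.
Lemma fmap_lin (X Y : Obj A) : islin (@fmap K A B F X Y).
Proof. by case: HF => _ h _ _ _ a x y; apply: h. Qed.
Lemma fmap0 (X Y : Obj A) : fmap F (0 : Mor A X Y) = 0.
Proof. exact (lin0 (fmap_lin (X:=X) (Y:=Y))). Qed.
Lemma fphi_iso (X : Obj A) : is_iso (fphi F X).
Proof. by case: HF. Qed.
Lemma F_dist X Y Z (f : Mor A X Y) (g : Mor A Y Z) (h : Mor A Z (sh A X)) :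
  dist A f g h -> dist B (fmap F f) (fmap F g) (mcomp B (fphi F X) (fmap F h)).
Proof. by case: HF => _ _ _ _; apply. Qed.

Lemma F_iso (X Y : Obj A) : iso_obj X Y -> iso_obj (F X) (F Y).
Proof.
case=> f [g [h1 h2]]; exists (fmap F f), (fmap F g).
by rewrite -!fmap_comp h1 h2 !fmap_id.
Qed.
Lemma F_zero (Z : Obj A) : is_zero_obj Z -> is_zero_obj (F Z).
Proof. by rewrite /is_zero_obj => z; rewrite -fmap_id z fmap0. Qed.
Lemma F_sh (X : Obj A) : iso_obj (F (sh A X)) (sh B (F X)).
Proof. by exists (fphi F X); apply: fphi_iso. Qed.
Lemma F_iter_sh k (X : Obj A) :
  iso_obj (F (iter k (sh A) X)) (iter k (sh B) (F X)).
Proof.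
elim: k => [|k IH] /=; first exact: iso_obj_refl (catT HB) _.
apply: (iso_obj_trans (catT HB) (F_sh _)); exact: sh_iso.
Qed.
Lemma F_shinv (X : Obj A) : iso_obj (F (shinv A X)) (shinv B (F X)).
Proof.
apply: (sh_reflect_iso HB).
apply: (iso_obj_trans (catT HB) (iso_obj_sym (F_sh _))).
apply: (iso_obj_trans (catT HB) (F_iso (shinv_iso HA X))).
exact: iso_obj_sym (shinv_iso HB _).
Qed.

Lemma F_homz (X Y : Obj A) : homz X Y -> homz (F X) (F Y) -> True.
Proof. by []. Qed.

Lemma ff_bij (ffF : fully_faithful F) (X Y : Obj A) :
  \dim {: Mor A X Y} = \dim {: Mor B (F X) (F Y)}.
Proof. exact: (dim_bij (fmap_lin (X:=X) (Y:=Y)) (ffF X Y)). Qed.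
Lemma ff_homz (ffF : fully_faithful F) (X Y : Obj A) :
  homz X Y -> homz (F X) (F Y).
Proof. by move=> /(homz_dim) h; apply/homz_dim; rewrite -ff_bij. Qed.

Lemma thick_pull (P : Obj B -> Prop) : is_thick P -> is_thick (fun X => P (F X)).
Proof.
case=> hi hs hsi ht hd; split.
- by move=> X Y /F_iso; apply: hi.
- by move=> X /hs; apply: hi; exact: iso_obj_sym (F_sh X).
- by move=> X /hsi; apply: hi; exact: iso_obj_sym (F_shinv X).
- by move=> X Y Z f g h /F_dist d; apply: ht d.
move=> X A1 B1 inj proj [h1 h2 h3] PX.
pose Yf := fun k : 'I_2 => if val k == 0%N then A1 else B1.
have e : (fun k : 'I_2 => F (Yf k)) = (fun k : 'I_2 => if val k == 0%N then F A1 else F B1).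
  by apply: FunctionalExtensionality.functional_extensionality => k; rewrite /Yf; case: ifP.
have : @is_dsum K B (F X) 2 (fun k => F (Yf k)) (fun k => fmap F (inj k)) (fun k => fmap F (proj k)).
  split.
  - by move=> k; rewrite -fmap_comp h1 fmap_id.
  - by move=> k l kl; rewrite -fmap_comp h2 // fmap0.
  - rewrite -fmap_id -h3.
    have lin := fmap_lin (X:=X) (Y:=X).
    by rewrite !big_ord_recr !big_ord0 /= !add0r (linD lin) !fmap_comp.
by move/(dsum_transport e) => [inj' [proj' ds]]; exact: hd ds PX.
Qed.
End FunL.

Section AdjL.
Variables (K : fieldType) (A B : tri_data K).
Variables (HA : is_triangulated A) (HB : is_triangulated B).
Variables (F : tfun A B) (G : tfun B A) (HF : is_tri_functor F) (HG : is_tri_functor G).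
Variables (eta : forall X : Obj A, Mor A X (G (F X)))
          (eps : forall Y : Obj B, Mor B (F (G Y)) Y).
Hypothesis Had : is_adjunction eta eps.

Local Notation cA := (catT HA).
Local Notation cB := (catT HB).

Lemma adj_factorL (X : Obj A) (D : Obj B) (f : Mor B (F X) D) :
  f = mcomp B (eps D) (fmap F (mcomp A (fmap G f) (eta X))).
Proof.
case: Had => _ n2 t1 _.
rewrite (fmap_comp HF) (compA cB) -n2 -(compA cB) t1 (comp1r cB) //.
Qed.
Lemma adj_factorR (X : Obj A) (D : Obj B) (g : Mor A X (G D)) :
  g = mcomp A (fmap G (mcomp B (eps D) (fmap F g))) (eta X).
Proof.
case: Had => n1 _ _ t2.
by rewrite (fmap_comp HG) -(compA cA) n1 (compA cA) t2 (comp1l cA).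
Qed.

Lemma adj_dim (X : Obj A) (D : Obj B) :
  \dim {: Mor B (F X) D} = \dim {: Mor A X (G D)}.
Proof.
apply: (dim_bij (f := fun f => mcomp A (fmap G f) (eta X))).
  move=> a x y /=.
  by rewrite (fmap_lin HG) (complinl cA).
exists (fun g => mcomp B (eps D) (fmap F g)) => x; [by rewrite -adj_factorL | by rewrite -adj_factorR].
Qed.

Lemma adj_homzL (X : Obj A) (D : Obj B) : is_zero_obj (G D) -> homz (F X) D.
Proof.
move=> z f; rewrite (adj_factorL f).
by rewrite (homz_zeroR cA z (mcomp A _ _)) (fmap0 HF) (comp0r cB).
Qed.

Lemma unit_iso (ffF : fully_faithful F) (X : Obj A) : iso_obj X (G (F X)).
Proof.
case: Had => n1 _ t1 t2.
case: (ffF (G (F X)) X) => inv c1 c2.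
pose x := inv (eps (F X)).
have Fx : fmap F x = eps (F X) by rewrite /x c2.
exists (eta X), x; split.
  case: (ffF X X) => i1 d1 _.
  by rewrite -[LHS]d1 -[RHS]d1 (fmap_comp HF) Fx t1 (fmap_id HF).
by rewrite -n1 Fx t2.
Qed.

Lemma counit_iso (ffG : fully_faithful G) (D : Obj B) : iso_obj (F (G D)) D.
Proof.
case: Had => _ n2 t1 t2.
case: (ffG D (F (G D))) => inv c1 c2.
pose x := inv (eta (G D)).
have Gx : fmap G x = eta (G D) by rewrite /x c2.
exists (eps D), x; split.
  by rewrite n2 Gx t1.
case: (ffG D D) => i1 d1 _.
by rewrite -[LHS]d1 -[RHS]d1 (fmap_comp HG) Gx t2 (fmap_id HG).
Qed.
End AdjL.

Lemma iter_zero (K : fieldType) (T : tri_data K) (HT : is_triangulated T) s (Z : Obj T) :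
  is_zero_obj Z -> is_zero_obj (iter s (sh T) Z).
Proof. by elim: s => //= s IH /IH; apply: sh_zero. Qed.

Section FiltL.
Variables (K : fieldType) (T : tri_data K) (HT : is_triangulated T).
Variables (r : nat) (S : 'I_r -> Obj T) (R1 R2 : int -> bool) (s : nat).
Hypothesis base : forall i j k l, R1 k -> R2 l ->
  homz (iter s (sh T) (shiftZ (S i) k)) (shiftZ (S j) l).

Lemma filt_van1 (C : Obj T) (B : Obj T) :
  (forall j l, R2 l -> homz C (shiftZ (S j) l)) -> Filt S R2 B -> homz C B.
Proof.
move=> hg; elim => {B}.
- by move=> j l; apply: hg.
- move=> Z z; exact (homz_zeroR (catT HT) z).
- move=> X Y i _ h; exact (homz_isoR (catT HT) i h).
- move=> A0 B0 C0 f g h d _ h1 _ h2; exact (vanR HT d h1 h2).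
Qed.

Lemma filt_van (A B : Obj T) : Filt S R1 A -> Filt S R2 B -> homz (iter s (sh T) A) B.
Proof.
move=> fA fB; elim: fA => {A}.
- move=> i k rk; apply: filt_van1 fB => j l rl; exact: base.
- move=> Z z; exact (homz_zeroL (catT HT) (iter_zero HT s z)).
- move=> X Y i _ h; exact (homz_isoL (catT HT) (iter_sh_iso HT s i) h).
- move=> A0 B0 C0 f g h d _ h1 _ h2.
  case: (tri_sh HT s d) => f' [g' [h' d']]; exact (vanL HT d' h1 h2).
Qed.
End FiltL.

Section SmcBase.
Variables (K : fieldType) (T : tri_data K) (HT : is_triangulated T).
Variables (r : nat) (S : 'I_r -> Obj T) (HS : is_smc S).

Lemma smc_neg t i j : (0 < t)%N -> homz (iter t (sh T) (S i)) (S j).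
Proof.
case: t => // t _.
case: HS => _ h _.
have := h i j (Negz t) (erefl _).
move/(homz_dim _ _).
by move/(homz_iter_shinv HT _ _ _).
Qed.

Lemma smc_base s i j k l : (0 <= k) -> ((l <= -1) \/ ((l <= 0) /\ (0 < s)%N)) ->
  homz (iter s (sh T) (shiftZ (S i) k)) (shiftZ (S j) l).
Proof.
case: k => // k _ /=.
rewrite -iterD.
case: l => [l|l].
  case=> //; case=> hl hs.
  have -> : l = 0%N by move: hl; rewrite lez_nat; case: l.
  apply: smc_neg; by rewrite addn_gt0 hs.
move=> _; apply/(homz_iter_shinv HT l.+1 _ _).
rewrite -iterD; apply: smc_neg; by rewrite addSn.
Qed.
End SmcBase.

Section Main.
Variables (K : closedFieldType) (X T Y : tri_data K)
  (HX : is_triangulated X) (HT : is_triangulated T) (HY : is_triangulated Y)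
  (R : recollement_data X T Y) (HR : is_recollement R)
  (m n : nat) (SX : 'I_m -> Obj X) (SY : 'I_n -> Obj Y)
  (HSX : is_smc SX) (HSY : is_smc SY)
  (U V : 'I_n -> Obj X)
  (g : forall i, Mor X (U i) (i_up_shriek R (j_low_shriek R (SY i))))
  (g' : forall i, Mor X (i_up_shriek R (j_low_shriek R (SY i))) (V i))
  (g'' : forall i, Mor X (V i) (sh X (U i)))
  (HU : forall i, Filt SX (fun k : int => 0 <= k) (U i))
  (HV : forall i, Filt SX (fun k : int => k <= -1) (V i))
  (Htrunc : forall i, dist X (g i) (g' i) (g'' i))
  (W : 'I_n -> Obj T)
  (w : forall i, Mor T (j_low_shriek R (SY i)) (W i))
  (w' : forall i, Mor T (W i) (sh T (i_low_star R (U i))))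
  (Hsharp : forall i,
     dist T (mcomp T (counit2 R (j_low_shriek R (SY i)))
                    (fmap (i_low_star R) (g i)))
            (w i) (w' i)).

Local Notation I := (i_low_star R).
Local Notation Is := (i_up_shriek R).
Local Notation Iu := (i_up_star R).
Local Notation Js := (j_low_shriek R).
Local Notation J := (j_up R).
Local Notation Jt := (j_low_star R).
Local Notation cT := (catT HT).
Local Notation cX := (catT HX).
Local Notation cY := (catT HY).

Lemma HIu : is_tri_functor Iu. Proof. by case: HR => -[]. Qed.
Lemma HI : is_tri_functor I. Proof. by case: HR => -[]. Qed.
Lemma HIs : is_tri_functor Is. Proof. by case: HR => -[]. Qed.
Lemma HJs : is_tri_functor Js. Proof. by case: HR => -[]. Qed.
Lemma HJ : is_tri_functor J. Proof. by case: HR => -[_ _ _ _ []]. Qed.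
Lemma HJt : is_tri_functor Jt. Proof. by case: HR => -[_ _ _ _ []]. Qed.
Lemma A2 : is_adjunction (unit2 R) (counit2 R). Proof. by case: HR => _ []. Qed.
Lemma A3 : is_adjunction (unit3 R) (counit3 R). Proof. by case: HR => _ []. Qed.
Lemma A4 : is_adjunction (unit4 R) (counit4 R). Proof. by case: HR => _ []. Qed.
Lemma ffI : fully_faithful I. Proof. by case: HR => _ _ []. Qed.
Lemma ffJt : fully_faithful Jt. Proof. by case: HR => _ _ []. Qed.
Lemma ffJs : fully_faithful Js. Proof. by case: HR => _ _ []. Qed.
Lemma Hz (C : Obj Y) : is_zero_obj (Is (Jt C)). Proof. by case: HR => _ _ _ h _; apply: h. Qed.
Lemma Htri (Q : Obj T) : (exists h, dist T (counit2 R Q) (unit4 R Q) h) /\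
          (exists h, dist T (counit3 R Q) (unit1 R Q) h).
Proof. by case: HR => _ _ _ _ h; apply: h. Qed.

Lemma homz_I_Jt (A : Obj X) (C : Obj Y) : homz (I A) (Jt C).
Proof. exact (adj_homzL HX HT HI A2 (Hz C)). Qed.
Lemma JI_zero (A : Obj X) : is_zero_obj (J (I A)).
Proof.
have h : homz (J (I A)) (J (I A)).
  apply/(homz_dim _ _); rewrite (adj_dim HT HY HJ HJt A4).
  apply/(homz_dim _ _); exact: homz_I_Jt.
exact: h.
Qed.
Lemma homz_Js_I (C : Obj Y) (A : Obj X) : homz (Js C) (I A).
Proof. exact (adj_homzL HY HT HJs A3 (JI_zero A)). Qed.

Lemma homz_Js_Jt (C D E : Obj Y) : iso_obj D E -> homz C E -> homz (Js C) (Jt D).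
Proof.
move=> iDE h; apply/(homz_dim _ _); rewrite (adj_dim HY HT HJs HJ A3).
rewrite (dim_postiso cY _ (counit_iso HJt A4 ffJt D)) (dim_postiso cY _ iDE).
exact/(homz_dim _ _).
Qed.


Lemma tri2 b : exists (u : Mor T (I (V b)) (W b))
  (v : Mor T (W b) (Jt (J (Js (SY b))))) h, dist T u v h.
Proof.
have d1 := F_dist HI (Htrunc b).
case: (Htri (Js (SY b))).1 => h0 d2.
case: (tr4 HT d1 d2 (Hsharp b)) => u [v [d _ _ _ _]].
by exists u, v, (mcomp T (shm T (fmap I (g' b))) h0).
Qed.

Lemma SX_filt a : Filt SX (fun k : int => 0 <= k) (SX a).
Proof. exact: (@Filt_gen K X m SX _ a 0 (erefl _)). Qed.
Lemma SX_filt0 a : Filt SX (fun k : int => k <= 0) (SX a).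
Proof. exact: (@Filt_gen K X m SX _ a 0 (erefl _)). Qed.

Lemma LV s (A : Obj X) b : Filt SX (fun k : int => 0 <= k) A ->
  homz (iter s (sh X) A) (V b).
Proof.
move=> fA; apply: (filt_van HX _ fA (HV b)) => i j k l hk hl.
by apply: (smc_base HX HSX) => //; left.
Qed.
Lemma LX s (A : Obj X) b : (0 < s)%N -> Filt SX (fun k : int => 0 <= k) A ->
  homz (iter s (sh X) A) (SX b).
Proof.
move=> s0 fA; apply: (filt_van HX _ fA (SX_filt0 b)) => i j k l hk hl.
by apply: (smc_base HX HSX) => //; right.
Qed.


Lemma homz_IW (A : Obj X) b : homz A (V b) -> homz (I A) (W b).
Proof.
move=> h; case: (tri2 b) => u [v [hh d]].
exact (vanR HT d (ff_homz HI ffI h) (@homz_I_Jt _ _)).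
Qed.

Lemma homz_JsW (C : Obj Y) b : homz C (SY b) -> homz (Js C) (W b).
Proof.
move=> h; case: (tri2 b) => u [v [hh d]].
exact (vanR HT d (@homz_Js_I _ _)
  (homz_Js_Jt (iso_obj_sym (unit_iso HJs A3 ffJs (SY b))) h)).
Qed.

Lemma Wsh_van s a (Q : Obj T) :
  homz (iter s (sh T) (Js (SY a))) Q ->
  homz (iter s (sh T) (sh T (I (U a)))) Q -> homz (iter s (sh T) (W a)) Q.
Proof.
move=> h1 h2; case: (tri_sh HT s (rot HT (Hsharp a))) => f' [g1 [h' d]].
exact (vanL HT d h1 h2).
Qed.

Lemma iso_shJs s (C : Obj Y) :
  iso_obj (Js (iter s (sh Y) C)) (iter s (sh T) (Js C)).
Proof. exact: (F_iter_sh HT HJs s C). Qed.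
Lemma iso_shI s (A : Obj X) :
  iso_obj (I (iter s (sh X) A)) (iter s (sh T) (I A)).
Proof. exact: (F_iter_sh HT HI s A). Qed.
Lemma iso_shshI s (A : Obj X) :
  iso_obj (I (iter s.+1 (sh X) A)) (iter s (sh T) (sh T (I A))).
Proof.
rewrite iterSr; apply: (iso_obj_trans cT (iso_shI s _)).
apply: (iter_sh_iso HT); exact: F_sh HI A.
Qed.

Lemma homz_shW_I s a b : homz (iter s (sh T) (W a)) (I (SX b)).
Proof.
apply: Wsh_van.
  exact (homz_isoL cT (iso_shJs s _) (@homz_Js_I _ _)).
exact (homz_isoL cT (iso_shshI s _) (ff_homz HI ffI (LX (s:=s.+1) (b:=b) (ltn0Sn s) (HU a)))).
Qed.

Lemma homz_shI_W s a b : homz (iter s (sh T) (I (SX a))) (W b).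
Proof.
exact (homz_isoL cT (iso_shI s _) (homz_IW (LV (s:=s) (b:=b) (SX_filt a)))).
Qed.

Lemma homz_shW_W s a b : (0 < s)%N -> homz (iter s (sh T) (W a)) (W b).
Proof.
move=> s0; apply: Wsh_van.
  apply: (homz_isoL cT (iso_shJs s _)); apply: homz_JsW.
  exact: (smc_neg HY HSY).
apply: (homz_isoL cT (iso_shshI s _)); apply: homz_IW.
exact: (LV (s:=s.+1) (b:=b) (HU a)).
Qed.

Lemma homz_shI_I s a b : (0 < s)%N -> homz (iter s (sh T) (I (SX a))) (I (SX b)).
Proof.
move=> s0; apply: (homz_isoL cT (iso_shI s _)); apply: (ff_homz HI ffI).
exact: (smc_neg HX HSX).
Qed.

Lemma dim_WW a b : \dim {: Mor T (W a) (W b)} = (a == b).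
Proof.
have h1 : homz (I (U a)) (W b) by apply: homz_IW; exact: (LV (s:=0) (b:=b) (HU a)).
have h2 : homz (sh T (I (U a))) (W b).
  apply: (homz_isoL cT (F_sh HI (U a))); apply: homz_IW; exact: (LV (s:=1) (b:=b) (HU a)).
rewrite (preiso HT (Hsharp a) h1 h2).
case: (tri2 b) => u [v [hh d]].
have k1 : homz (Js (SY a)) (I (V b)) by exact: homz_Js_I.
have k2 : homz (Js (SY a)) (sh T (I (V b))).
  exact (homz_isoR cT (F_sh HI (V b)) (@homz_Js_I _ _)).
rewrite (postiso HT d k1 k2) (adj_dim HY HT HJs HJ A3).
rewrite (dim_postiso cY _ (counit_iso HJt A4 ffJt _)).
rewrite (dim_postiso cY _ (iso_obj_sym (unit_iso HJs A3 ffJs (SY b)))).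
by case: HSY => h _ _; apply: h.
Qed.


Lemma glue_lo a : glue I SX W (lshift n a) = I (SX a).
Proof. by rewrite /glue -[lshift n a]/(unsplit (inl a)) unsplitK. Qed.
Lemma glue_hi b : glue I SX W (rshift m b) = W b.
Proof. by rewrite /glue -[rshift m b]/(unsplit (inr b)) unsplitK. Qed.

Lemma thick_rot2 (P : Obj T -> Prop) : is_thick P ->
  forall A B C (f : Mor T A B) (g0 : Mor T B C) (h : Mor T C (sh T A)),
  dist T f g0 h -> P C -> P (sh T A) -> P B.
Proof.
case=> hi hs hsi ht _ A B C f g0 h d pC pA.
have d2 := rot HT (rot HT d).
have := ht _ _ _ _ _ _ d2 pC pA => /hsi; apply: hi; exact (shinv_sh HT _).
Qed.

Lemma gen (P : Obj T -> Prop) : is_thick P -> (forall k, P (glue I SX W k)) ->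
  forall Q, P Q.
Proof.
move=> tP hP.
have PI : forall A, P (I A).
  case: HSX => _ _ hg; apply: (hg _ (thick_pull HX HT HI tP)) => a.
  by rewrite -glue_lo.
have PJs : forall C, P (Js C).
  case: HSY => _ _ hg; apply: (hg _ (thick_pull HY HT HJs tP)) => b.
  apply: (thick_rot2 tP (Hsharp b)); first by rewrite -glue_hi.
  by case: tP => _ hs _ _ _; apply/hs/PI.
move=> Q; case: (Htri Q).2 => h d.
apply: (thick_rot2 tP d) => //.
by case: tP => _ hs _ _ _; apply/hs/PJs.
Qed.

Lemma main_smc : is_smc (glue I SX W).
Proof.
split; last exact: gen.
- move=> k l; case: (split_ordP k) => a ->; case: (split_ordP l) => b ->.
  + rewrite !glue_lo eq_lshift -(ff_bij HI ffI).
    by case: HSX => h _ _; apply: h.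
  + rewrite glue_lo glue_hi.
    have -> : (lshift n a == rshift m b) = false.
      apply/eqP => /(congr1 val) /= e; have := ltn_ord a.
      by rewrite e ltnNge leq_addr.
    apply/(homz_dim _ _); exact (homz_shI_W (s:=0) (a:=a) (b:=b)).
  + rewrite glue_lo glue_hi.
    have -> : (rshift m a == lshift n b) = false.
      apply/eqP => /(congr1 val) /= e; have := ltn_ord b.
      by rewrite -e ltnNge leq_addr.
    apply/(homz_dim _ _); exact (homz_shW_I (s:=0) (a:=a) (b:=b)).
  + by rewrite !glue_hi eq_rshift dim_WW.
- move=> k l [t|t] //= _.
  apply/(homz_dim _ _)/(homz_iter_shinv HT t.+1 _ _).
  case: (split_ordP k) => a ->; case: (split_ordP l) => b ->.
  + rewrite !glue_lo; exact (homz_shI_I (s:=t.+1) (a:=a) (b:=b) (ltn0Sn t)).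
  + rewrite glue_lo glue_hi; exact (homz_shI_W (s:=t.+1) (a:=a) (b:=b)).
  + rewrite glue_hi glue_lo; exact (homz_shW_I (s:=t.+1) (a:=a) (b:=b)).
  + rewrite !glue_hi; exact (homz_shW_W (s:=t.+1) (a:=a) (b:=b) (ltn0Sn t)).
Qed.

End Main.

Unset Implicit Arguments.
Theorem theorem3p6 (K : closedFieldType) (X T Y : tri_data K)
  (HX : is_triangulated X) (HT : is_triangulated T) (HY : is_triangulated Y)
  (R : recollement_data X T Y) (HR : is_recollement R)
  (m n : nat) (SX : 'I_m -> Obj X) (SY : 'I_n -> Obj Y)
  (HSX : is_smc SX) (HSY : is_smc SY)
  (U V : 'I_n -> Obj X)
  (g : forall i, Mor X (U i) (i_up_shriek R (j_low_shriek R (SY i))))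
  (g' : forall i, Mor X (i_up_shriek R (j_low_shriek R (SY i))) (V i))
  (g'' : forall i, Mor X (V i) (sh X (U i)))
  (HU : forall i, Filt SX (fun k : int => 0 <= k) (U i))
  (HV : forall i, Filt SX (fun k : int => k <= -1) (V i))
  (Htrunc : forall i, dist X (g i) (g' i) (g'' i))
  (W : 'I_n -> Obj T)
  (w : forall i, Mor T (j_low_shriek R (SY i)) (W i))
  (w' : forall i, Mor T (W i) (sh T (i_low_star R (U i))))
  (Hsharp : forall i,
     dist T (mcomp T (counit2 R (j_low_shriek R (SY i)))
                    (fmap (i_low_star R) (g i)))
            (w i) (w' i)) :
  is_smc (glue (i_low_star R) SX W).
Proof. exact: (main_smc HX HT HY HR HSX HSY HU HV Htrunc Hsharp). Qed.
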